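(* Call-by-value coupled logical bisimilarity coincides with the contextual equivalences: $(\approx^v_1,\approx^v_2)=(\simeq^v,\cong^v)$. In particular $(\simeq^v,\cong^v)$ is itself a call-by-value coupled logical bisimulation, and $\approx^v_1=\simeq^v=\cong^v=\approx^v_2$.
   Context: $\Lambda^\bullet$ is the set of closed $\lambda$-terms; values are closed abstractions. Call-by-value reduction on closed terms: $MN\longrightarrow MN'$ if $N\longrightarrow N'$; $MV\longrightarrow M'V$ if $M\longrightarrow M'$ and $V$ is a value; $(\lambda x.P)V\longrightarrow P[V/x]$ if $V$ is a value; $\Longrightarrow$ is the reflexive transitive closure; $M{\Downarrow}$ means $M\Longrightarrow V$ for some value $V$. Contexts are generated by $C::=x\mid[\cdot]\mid C\,C\mid\lambda x.C$, possibly with several holes numbered left to right; $C[\widetilde M]$ fills the $i$-th hole with $M_i$; $C[M]$ fills every hole with $M$. For $\mathcal{R}\subseteq\Lambda^\bullet\times\Lambda^\bullet$, $\mathcal{R}^\star=\{(C[\widetilde M],C[\widetilde N]) : C\text{ a context},\ M_i\,\mathcal{R}\,N_i\ \forall i,\ C[\widetilde M],C[\widetilde N]\in\Lambda^\bullet\}$. $M\simeq^v N$ iff for all contexts $C$ with $C[M],C[N]$ closed, $C[M]{\Downarrow}\iff C[N]{\Downarrow}$. Call-by-value evaluation contexts: $\mathcal{E}::=[\cdot]\mid M\,\mathcal{E}\mid\mathcal{E}\,V$ ($M\in\Lambda^\bullet$, $V$ a value); $M\cong^v N$ iff for all $\mathcal{E}$, $\mathcal{E}[M]{\Downarrow}\iff\mathcal{E}[N]{\Downarrow}$.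 A coupled relation is a pair $(\mathcal{R}_1,\mathcal{R}_2)$ of relations on $\Lambda^\bullet$ with $\mathcal{R}_1\subseteq\mathcal{R}_2$. It is a call-by-value coupled logical bisimulation if whenever $M\,\mathcal{R}_2\,N$: (1) if $M\longrightarrow M'$ then there is $N'$ with $N\Longrightarrow N'$ and $M'\,\mathcal{R}_2\,N'$; (2) if $M=\lambda x.M'$ then $N\Longrightarrow\lambda x.N'$ for some $N'$, $\lambda x.M'\,\mathcal{R}_1\,\lambda x.N'$, and for all values $P,Q$ with $P\,\mathcal{R}_1^\star\,Q$, $M'[P/x]\,\mathcal{R}_2\,N'[Q/x]$; (3) the converses of (1),(2) with $M$ and $N$ exchanged. $(\approx^v_1,\approx^v_2)$ is the componentwise union of all call-by-value coupled logical bisimulations. *)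

(* Defs.v *)
(* Pure lambda calculus with de Bruijn indices (terms up to alpha). *)
From Stdlib Require Import List Arith.
Import ListNotations.

Inductive term : Type :=
| Var : nat -> term
| Lam : term -> term
| App : term -> term -> term.

Fixpoint closedn (k : nat) (t : term) : Prop :=
  match t with
  | Var n => n < k
  | Lam b => closedn (S k) b
  | App a b => closedn k a /\ closedn k b
  end.

Definition closed (t : term) : Prop := closedn 0 t.

Definition is_value (t : term) : Prop := exists b, t = Lam b.

(* subst k V t : replace index k (the variable bound by the outermost
   removed binder, seen at depth k) by the CLOSED term V; no shifting of V
   is needed since V is closed; indices above k are decremented. *)
Fixpoint subst (k : nat) (V : term) (t : term) : term :=
  match t with
  | Var n => if Nat.eqb n k then V else if Nat.ltb n k then Var n else Var (pred n)
  | Lam b => Lam (subst (S k) V b)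
  | App a b => App (subst k V a) (subst k V b)
  end.

(* P[V/x] where t = \x.P *)
Definition inst (P V : term) : term := subst 0 V P.

(* call-by-value reduction (argument evaluated first) *)
Inductive step : term -> term -> Prop :=
| step_appR : forall M N N', step N N' -> step (App M N) (App M N')
| step_appL : forall M M' V, step M M' -> is_value V -> step (App M V) (App M' V)
| step_beta : forall P V, is_value V -> step (App (Lam P) V) (inst P V).

Inductive steps : term -> term -> Prop :=
| steps_refl : forall M, steps M M
| steps_trans : forall M M' M'', step M M' -> steps M' M'' -> steps M M''.

Definition converges (M : term) : Prop := exists V, steps M V /\ is_value V.

(* multi-hole contexts; holes numbered left to right *)
Inductive ctx : Type :=
| CVar : nat -> ctx
| CHole : ctx
| CApp : ctx -> ctx -> ctx
| CLam : ctx -> ctx.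

Fixpoint nholes (C : ctx) : nat :=
  match C with
  | CVar _ => 0
  | CHole => 1
  | CApp C1 C2 => nholes C1 + nholes C2
  | CLam C1 => nholes C1
  end.

(* C[~M]: fill the i-th hole with the i-th element of the list (filling
   is capturing, but only closed terms are ever plugged in below) *)
Fixpoint fill (C : ctx) (Ms : list term) : term :=
  match C with
  | CVar n => Var n
  | CHole => match Ms with M :: _ => M | [] => Var 0 end
  | CApp C1 C2 => App (fill C1 (firstn (nholes C1) Ms)) (fill C2 (skipn (nholes C1) Ms))
  | CLam C1 => Lam (fill C1 Ms)
  end.

Fixpoint fill1 (C : ctx) (M : term) : term :=
  match C with
  | CVar n => Var n
  | CHole => M
  | CApp C1 C2 => App (fill1 C1 M) (fill1 C2 M)
  | CLam C1 => Lam (fill1 C1 M)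
  end.

Definition rel := term -> term -> Prop.

Definition ctx_closure (R : rel) : rel := fun P Q =>
  exists (C : ctx) (Ms Ns : list term),
    length Ms = nholes C /\ Forall2 R Ms Ns /\
    closed (fill C Ms) /\ closed (fill C Ns) /\
    P = fill C Ms /\ Q = fill C Ns.

Definition ctx_equiv (M N : term) : Prop :=
  closed M /\ closed N /\
  forall C : ctx, closed (fill1 C M) -> closed (fill1 C N) ->
    (converges (fill1 C M) <-> converges (fill1 C N)).

Inductive ectx : Type :=
| EHole : ectx
| EArg : term -> ectx -> ectx
| EFun : ectx -> term -> ectx.

Fixpoint ectx_ok (E : ectx) : Prop :=
  match E with
  | EHole => True
  | EArg M E1 => closed M /\ ectx_ok E1
  | EFun E1 V => closed V /\ is_value V /\ ectx_ok E1
  end.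

Fixpoint efill (E : ectx) (M : term) : term :=
  match E with
  | EHole => M
  | EArg N E1 => App N (efill E1 M)
  | EFun E1 V => App (efill E1 M) V
  end.

Definition ev_equiv (M N : term) : Prop :=
  closed M /\ closed N /\
  forall E : ectx, ectx_ok E ->
    (converges (efill E M) <-> converges (efill E N)).

Definition cbv_coupled_bisim (R1 R2 : rel) : Prop :=
  (forall M N, R2 M N -> closed M /\ closed N) /\
  (forall M N, R1 M N -> R2 M N) /\
  (forall M N, R2 M N ->
     (forall M', step M M' -> exists N', steps N N' /\ R2 M' N') /\
     (* (2) *)
     (forall M', M = Lam M' -> exists N', steps N (Lam N') /\ R1 (Lam M') (Lam N') /\
        forall P Q, is_value P -> is_value Q -> ctx_closure R1 P Q ->
          R2 (inst M' P) (inst N' Q)) /\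
     (forall N', step N N' -> exists M', steps M M' /\ R2 M' N') /\
     (forall N', N = Lam N' -> exists M', steps M (Lam M') /\ R1 (Lam M') (Lam N') /\
        forall P Q, is_value P -> is_value Q -> ctx_closure R1 P Q ->
          R2 (inst M' P) (inst N' Q))).

Definition approx1 : rel := fun M N =>
  exists R1 R2, cbv_coupled_bisim R1 R2 /\ R1 M N.
Definition approx2 : rel := fun M N =>
  exists R1 R2, cbv_coupled_bisim R1 R2 /\ R2 M N.

(* Main.v *)
Require Import Defs.
From Stdlib Require Import List Arith Lia.
Import ListNotations.

Lemma closedn_weak t : forall k k', closedn k t -> k <= k' -> closedn k' t.
Proof. induction t; simpl; intros k k' H Hle.
- lia.
- apply (IHt (S k)); [exact H| lia].
- destruct H; split; eauto.
Qed.

Lemma subst_closedn t : forall k V, closedn k t -> subst k V t = t.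
Proof. induction t; simpl; intros k V H.
- destruct (Nat.eqb_spec n k); [lia|]. destruct (Nat.ltb_spec n k); [reflexivity|lia].
- f_equal; auto.
- destruct H; f_equal; auto.
Qed.

Lemma closedn_subst t : forall m k V, closedn (S m) t -> k <= m -> closed V -> closedn m (subst k V t).
Proof. induction t; simpl; intros m k V H Hk HV.
- destruct (Nat.eqb_spec n k). apply closedn_weak with 0; [exact HV|lia].
  destruct (Nat.ltb_spec n k); simpl; lia.
- apply IHt; auto; lia.
- destruct H; split; eauto.
Qed.

Lemma step_closed M M' : step M M' -> closed M -> closed M'.
Proof. unfold closed. induction 1; simpl; intros HC.
- destruct HC; split; auto.
- destruct HC; split; auto.
- destruct HC as [H1 H2]. unfold inst. apply closedn_subst; auto.
Qed.

Lemma steps_closed M M' : steps M M' -> closed M -> closed M'.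
Proof. induction 1; intros; eauto using step_closed. Qed.

Lemma lam_nostep b X : ~ step (Lam b) X.
Proof. intros H; inversion H. Qed.

Lemma val_nostep V X : is_value V -> ~ step V X.
Proof. intros [b ->]; apply lam_nostep. Qed.

Lemma step_det M X : step M X -> forall Y, step M Y -> X = Y.
Proof. induction 1; intros Y H'; inversion H'; subst.
- f_equal; auto.
- exfalso; eapply val_nostep; eauto.
- exfalso; eapply val_nostep; eauto.
- exfalso; eapply val_nostep; eauto.
- f_equal; auto.
- exfalso; eapply lam_nostep; eauto.
- exfalso; eapply val_nostep; eauto.
- exfalso; eapply lam_nostep; eauto.
- reflexivity.
Qed.

Lemma steps_lam b X : steps (Lam b) X -> X = Lam b.
Proof. intros H; inversion H; subst; auto. exfalso; eapply lam_nostep; eauto. Qed.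

Lemma steps_trans' M N P : steps M N -> steps N P -> steps M P.
Proof. induction 1; intros; eauto using steps_trans. Qed.

Lemma steps_appR M N N' : steps N N' -> steps (App M N) (App M N').
Proof. induction 1; [constructor|]. eapply steps_trans; [apply step_appR; eauto|auto]. Qed.

Lemma steps_appL M M' V : steps M M' -> is_value V -> steps (App M V) (App M' V).
Proof. induction 1; intros; [constructor|]. eapply steps_trans; [apply step_appL; eauto|auto]. Qed.

Lemma steps_conv M N : steps M N -> converges N -> converges M.
Proof. intros H [V [H1 H2]]. exists V; split; eauto using steps_trans'. Qed.

Fixpoint ecomp (E F : ectx) : ectx :=
  match E with EHole => F | EArg N E1 => EArg N (ecomp E1 F) | EFun E1 V => EFun (ecomp E1 F) V end.

Lemma efill_comp E F X : efill (ecomp E F) X = efill E (efill F X).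
Proof. induction E; simpl; congruence. Qed.

Lemma ecomp_ok E F : ectx_ok E -> ectx_ok F -> ectx_ok (ecomp E F).
Proof. induction E; simpl; intuition. Qed.

Lemma efill_step E M M' : ectx_ok E -> step M M' -> step (efill E M) (efill E M').
Proof. induction E; simpl; intros HE HS; auto.
- apply step_appR; tauto.
- apply step_appL; tauto.
Qed.

Lemma efill_closed E M : ectx_ok E -> closed M -> closed (efill E M).
Proof. unfold closed; induction E; simpl; intuition. Qed.

Lemma ev_refl M : closed M -> ev_equiv M M.
Proof. intros; repeat split; auto. Qed.

Lemma ev_sym M N : ev_equiv M N -> ev_equiv N M.
Proof. intros [? [? H]]; repeat split; auto; apply H; auto. Qed.

Lemma ev_trans M N P : ev_equiv M N -> ev_equiv N P -> ev_equiv M P.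
Proof. intros [? [? H]] [? [? H']]; repeat split; auto.
- intros. apply H', H; auto.
- intros. apply H, H'; auto.
Qed.

Lemma ev_closed M N : ev_equiv M N -> closed M /\ closed N.
Proof. intros [? [? _]]; auto. Qed.

Lemma ev_step M M' : closed M -> step M M' -> ev_equiv M M'.
Proof. intros HC HS; split; [auto|split; [eapply step_closed; eauto|]].
intros E HE; split.
- intros [V [H1 H2]]. inversion H1; subst.
  + exfalso; eapply val_nostep; eauto using efill_step.
  + exists V; split; auto. rewrite <- (step_det _ _ H _ (efill_step E _ _ HE HS)). auto.
- intros. eapply steps_conv; [|eauto]. eapply steps_trans; [apply efill_step; eauto|constructor].
Qed.

Lemma ev_steps M M' : closed M -> steps M M' -> ev_equiv M M'.
Proof. intros HC H; induction H. apply ev_refl; auto.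
  eapply ev_trans; [apply ev_step; eauto|]. apply IHsteps. eapply step_closed; eauto. Qed.

Lemma ev_conv M N : ev_equiv M N -> converges M -> converges N.
Proof. intros [? [? H]] Hc. apply (H EHole); simpl; auto. Qed.

Lemma ev_argctx A M N : closed A -> ev_equiv M N -> ev_equiv (App A M) (App A N).
Proof. intros HA [? [? H]]; split; [|split]; try (unfold closed; simpl; tauto).
intros E HE. pose proof (H (ecomp E (EArg A EHole))) as H'. rewrite !efill_comp in H'. simpl in H'. apply H'.
  apply ecomp_ok; simpl; auto.
Qed.

Lemma ev_functx V M N : closed V -> is_value V -> ev_equiv M N -> ev_equiv (App M V) (App N V).
Proof. intros HV HV' [? [? H]]; split; [|split]; try (unfold closed; simpl; tauto).
intros E HE. pose proof (H (ecomp E (EFun EHole V))) as H'. rewrite !efill_comp in H'. simpl in H'. apply H'.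
  apply ecomp_ok; simpl; auto.
Qed.
Inductive U (R : rel) : term -> term -> Prop :=
| U_hole : forall A B, R A B -> U R A B
| U_var : forall n, U R (Var n) (Var n)
| U_lam : forall a b, U R a b -> U R (Lam a) (Lam b)
| U_app : forall a a' b b', U R a a' -> U R b b' -> U R (App a b) (App a' b').

Ltac ucon := first [apply U_var | apply U_lam | apply U_app].

Lemma U_refl R t : U R t t.
Proof. induction t; ucon; auto. Qed.

Lemma U_mono (R S : rel) X Y : (forall a b, R a b -> S a b) -> U R X Y -> U S X Y.
Proof. intros HRS; induction 1; [apply U_hole; auto|ucon..]; auto. Qed.

Lemma U_sym (R : rel) X Y : (forall a b, R a b -> R b a) -> U R X Y -> U R Y X.
Proof. intros HR; induction 1; [apply U_hole; auto|ucon..]; auto. Qed.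

Lemma U_subst (R : rel) (HR : forall A B, R A B -> closed A /\ closed B) :
  forall P P', U R P P' -> forall k V V', U R V V' -> U R (subst k V P) (subst k V' P').
Proof. induction 1; intros k V V' HV; simpl.
- destruct (HR _ _ H). rewrite !subst_closedn; try (apply closedn_weak with 0; auto; lia).
  apply U_hole; auto.
- destruct (Nat.eqb n k); auto. destruct (Nat.ltb n k); ucon.
- ucon; auto.
- ucon; auto.
Qed.

Lemma U_fill1 (R : rel) C M N : R M N -> U R (fill1 C M) (fill1 C N).
Proof. intros H; induction C; simpl; [ucon|apply U_hole|ucon|ucon]; auto. Qed.

Lemma U_efill (R : rel) E M N : U R M N -> U R (efill E M) (efill E N).
Proof. intros H; induction E; simpl; auto; ucon; auto using U_refl. Qed.

Lemma U_ctx (R : rel) P Q : U R P Q -> exists C Ms Ns, length Ms = nholes C /\ Forall2 R Ms Ns /\ P = fill C Ms /\ Q = fill C Ns.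
Proof. induction 1.
- exists CHole, [A], [B]; simpl; auto.
- exists (CVar n), [], []; simpl; auto.
- destruct IHU as [C [Ms [Ns [H1 [H2 [H3 H4]]]]]].
  exists (CLam C), Ms, Ns; simpl; subst; auto.
- destruct IHU1 as [C [Ms [Ns [H1 [H2 [H3 H4]]]]]].
  destruct IHU2 as [C' [Ms' [Ns' [H1' [H2' [H3' H4']]]]]].
  pose proof (Forall2_length H2) as HL.
  exists (CApp C C'), (Ms ++ Ms'), (Ns ++ Ns'); simpl; subst.
  rewrite length_app. repeat split; auto using Forall2_app.
  + rewrite <- H1, firstn_app, skipn_app, Nat.sub_diag, firstn_all, skipn_all. simpl.
    rewrite app_nil_r. reflexivity.
  + rewrite <- H1, HL, firstn_app, skipn_app, Nat.sub_diag, firstn_all, skipn_all. simpl.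
    rewrite app_nil_r. reflexivity.
Qed.

Lemma Forall2_firstn {A B} (R : A -> B -> Prop) n l l' : Forall2 R l l' -> Forall2 R (firstn n l) (firstn n l').
Proof. intros H; revert n; induction H; intros [|m]; simpl; auto. Qed.

Lemma Forall2_skipn {A B} (R : A -> B -> Prop) n l l' : Forall2 R l l' -> Forall2 R (skipn n l) (skipn n l').
Proof. intros H; revert n; induction H; intros [|m]; simpl; auto. Qed.

Lemma fill_U (R : rel) C : forall Ms Ns, length Ms = nholes C -> Forall2 R Ms Ns -> U R (fill C Ms) (fill C Ns).
Proof. induction C; simpl; intros Ms Ns HL HF.
- ucon.
- inversion HF; subst; simpl in HL; try lia. apply U_hole; auto.
- ucon.
  + apply IHC1. rewrite length_firstn; lia. apply Forall2_firstn; auto.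
  + apply IHC2. rewrite length_skipn; lia. apply Forall2_skipn; auto.
- ucon; auto.
Qed.

Lemma ctx_closure_U (R : rel) P Q : ctx_closure R P Q -> U R P Q.
Proof. intros [C [Ms [Ns [H1 [H2 [_ [_ [-> ->]]]]]]]]. apply fill_U; auto. Qed.

Lemma U_ctx_closure (R : rel) P Q : U R P Q -> closed P -> closed Q -> ctx_closure R P Q.
Proof. intros H HP HQ. destruct (U_ctx _ _ _ H) as [C [Ms [Ns [H1 [H2 [-> ->]]]]]].
  exists C, Ms, Ns; repeat split; auto. Qed.

Definition Uev := U ev_equiv.

Lemma ciu_val V Y : Uev V Y -> is_value V -> closed Y ->
  exists Y', is_value Y' /\ ev_equiv Y Y' /\ Uev V Y'.
Proof. intros H HV HY. inversion H; subst.
- assert (HcV : converges V) by (exists V; split; [constructor|auto]).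
  destruct (ev_conv _ _ H0 HcV) as [Y' [H1 H2]]. exists Y'; split; auto.
  assert (ev_equiv Y Y') by (apply ev_steps; auto). split; auto.
  apply U_hole. eapply ev_trans; eauto.
- destruct HV; discriminate.
- exists (Lam b); split; [eexists; eauto|]. split; auto. apply ev_refl; auto.
- destruct HV; discriminate.
Qed.
Lemma Uev_subst P P' V V' : Uev P P' -> Uev V V' -> Uev (inst P V) (inst P' V').
Proof. intros. unfold inst. apply U_subst; auto. apply ev_closed. Qed.

Lemma closed_app a b : closed (App a b) -> closed a /\ closed b.
Proof. unfold closed; simpl; auto. Qed.

Lemma ciu_step M M' : step M M' -> forall Y, closed M -> closed Y -> Uev M Y ->
  exists Y', ev_equiv Y Y' /\ Uev M' Y'.
Proof.
  intros HS Y HM HY HU.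
  assert (Hgen : ev_equiv M Y -> exists Y', ev_equiv Y Y' /\ Uev M' Y').
  { intros H. exists Y; split; [apply ev_refl; auto|]. apply U_hole.
    apply ev_trans with M; [apply ev_sym, ev_step; eauto| auto]. }
  revert Y HM HY HU Hgen. induction HS; intros Y HM HY HU Hgen;
    inversion HU; subst; try (apply Hgen; auto; fail);
    destruct (closed_app _ _ HM) as [HM1 HM2]; destruct (closed_app _ _ HY) as [HY1 HY2].
  - assert (Hg : ev_equiv N b' -> exists Y', ev_equiv b' Y' /\ Uev N' Y').
    { intros. exists b'; split; [apply ev_refl; auto|]. apply U_hole.
      apply ev_trans with N; [apply ev_sym, ev_step; eauto| auto]. }
    destruct (IHHS _ HM2 HY2 H3 Hg) as [b'' [Hb Ub]].
    exists (App a' b''); split.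
    + apply ev_argctx; auto.
    + ucon; auto.
  - destruct (ciu_val _ _ H4 H HY2) as [v'' [Hv [Hev Uv]]].
    assert (Hg : ev_equiv M a' -> exists Y', ev_equiv a' Y' /\ Uev M' Y').
    { intros. exists a'; split; [apply ev_refl; auto|]. apply U_hole.
      apply ev_trans with M; [apply ev_sym, ev_step; eauto| auto]. }
    destruct (IHHS _ HM1 HY1 H2 Hg) as [a'' [Ha Ua]].
    destruct (ev_closed _ _ Hev) as [_ Hcv]. destruct (ev_closed _ _ Ha) as [_ Hca].
    exists (App a'' v''); split.
    + eapply ev_trans; [apply ev_argctx; eauto|]. apply ev_functx; auto.
    + ucon; auto.
  - destruct (ciu_val _ _ H4 H HY2) as [v'' [Hv [Hev Uv]]].
    destruct (ev_closed _ _ Hev) as [_ Hcv].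
    inversion H2; subst.
    + exists (inst P v''); split.
      * eapply ev_trans; [apply ev_argctx; eauto|].
        eapply ev_trans; [apply ev_functx; eauto; apply ev_sym; eauto|].
        apply ev_step; [unfold closed; simpl; auto|]. apply step_beta; auto.
      * apply Uev_subst; auto. apply U_refl.
    + exists (inst b v''); split.
      * eapply ev_trans; [apply ev_argctx; eauto|].
        apply ev_step; [unfold closed in *; simpl in *; auto|]. apply step_beta; auto.
      * apply Uev_subst; auto.
Qed.

Lemma ciu_conv M V : steps M V -> is_value V -> forall Y, closed M -> closed Y -> Uev M Y -> converges Y.
Proof. induction 1; intros HV Y HM HY HU.
- destruct (ciu_val _ _ HU HV HY) as [Y' [HY' [Hev _]]].
  apply (ev_conv _ _ (ev_sym _ _ Hev)). exists Y'; split; [constructor|auto].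
- destruct (ciu_step _ _ H _ HM HY HU) as [Y' [Hev HU']].
  apply (ev_conv _ _ (ev_sym _ _ Hev)). apply IHsteps; auto.
  eapply step_closed; eauto. apply (ev_closed _ _ Hev).
Qed.

Lemma Uev_conv M Y : closed M -> closed Y -> Uev M Y -> converges M -> converges Y.
Proof. intros HM HY HU [V [H1 H2]]. eapply ciu_conv; eauto. Qed.

Lemma Uev_ev P Q : closed P -> closed Q -> Uev P Q -> ev_equiv P Q.
Proof. intros HP HQ HU; split; [auto|split; [auto|]]. intros E HE; split; intros Hc.
- apply (Uev_conv (efill E P)); auto using efill_closed. apply U_efill; auto.
- apply (Uev_conv (efill E Q)); auto using efill_closed. apply U_efill.
  apply U_sym; auto. apply ev_sym.
Qed.

Lemma ev_ctx M N : ev_equiv M N -> ctx_equiv M N.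
Proof. intros H. destruct (ev_closed _ _ H) as [HM HN]. split; [auto|split; [auto|]].
  intros C H1 H2; split; intros Hc.
- apply (Uev_conv (fill1 C M)); auto. apply U_fill1; auto.
- apply (Uev_conv (fill1 C N)); auto. apply U_fill1; apply ev_sym; auto.
Qed.

Fixpoint ctx_of_term (t : term) : ctx :=
  match t with Var n => CVar n | Lam b => CLam (ctx_of_term b) | App a b => CApp (ctx_of_term a) (ctx_of_term b) end.
Lemma fill1_cot t M : fill1 (ctx_of_term t) M = t.
Proof. induction t; simpl; congruence. Qed.
Fixpoint ctx_of_ectx (E : ectx) : ctx :=
  match E with EHole => CHole | EArg N E1 => CApp (ctx_of_term N) (ctx_of_ectx E1)
  | EFun E1 V => CApp (ctx_of_ectx E1) (ctx_of_term V) end.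
Lemma fill1_coe E M : fill1 (ctx_of_ectx E) M = efill E M.
Proof. induction E; simpl; rewrite ?fill1_cot; congruence. Qed.

Lemma ctx_ev M N : ctx_equiv M N -> ev_equiv M N.
Proof. intros [HM [HN H]]. split; [auto|split; [auto|]]. intros E HE.
  rewrite <- !fill1_coe. apply H; rewrite fill1_coe; apply efill_closed; auto. Qed.

Lemma ctx_closure_ev P Q : ctx_closure ctx_equiv P Q -> ev_equiv P Q.
Proof. intros H. assert (closed P /\ closed Q) as [HP HQ].
  { destruct H as [C [Ms [Ns [_ [_ [H1 [H2 [-> ->]]]]]]]]; auto. }
  apply Uev_ev; auto. eapply U_mono; [|apply ctx_closure_U; eauto]. apply ctx_ev. Qed.

Lemma ev_lam_inst A B P Q : ev_equiv (Lam A) (Lam B) -> is_value P -> is_value Q ->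
  ctx_closure ctx_equiv P Q -> ev_equiv (inst A P) (inst B Q).
Proof. intros H HP HQ HC. pose proof (ctx_closure_ev _ _ HC) as HPQ.
  destruct (ev_closed _ _ HPQ) as [cP cQ]. destruct (ev_closed _ _ H) as [cA cB].
  eapply ev_trans; [apply ev_sym, ev_step; [|apply step_beta; eauto]; unfold closed in *; simpl; auto|].
  eapply ev_trans; [apply ev_functx; eauto|].
  eapply ev_trans; [apply ev_argctx; eauto|].
  apply ev_step; [unfold closed in *; simpl; auto|apply step_beta; auto].
Qed.
Section Sound.
Variables R1 R2 : rel.
Hypothesis B : cbv_coupled_bisim R1 R2.

Lemma B_closed M N : R2 M N -> closed M /\ closed N.
Proof. destruct B as [H _]; auto. Qed.
Lemma B_sub M N : R1 M N -> R2 M N.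
Proof. destruct B as [_ [H _]]; auto. Qed.
Definition B_clause M N (H : R2 M N) := proj2 (proj2 B) M N H.

Inductive T : term -> term -> Prop :=
| T_hole : forall A B, R2 A B -> T A B
| T_U : forall A B, U R1 A B -> T A B
| T_app : forall a a' b b', T a a' -> T b b' -> T (App a b) (App a' b').

Lemma T_app_inv a b Y : T (App a b) Y -> R2 (App a b) Y \/ exists a' b', Y = App a' b' /\ T a a' /\ T b b'.
Proof. intros H; inversion H; subst; auto.
- inversion H0; subst; [left; apply B_sub; auto|]. right; do 2 eexists; split; [eauto|split; apply T_U; auto].
- right; eauto.
Qed.

Lemma T_val b Y : T (Lam b) Y -> exists Y', steps Y Y' /\ is_value Y' /\ U R1 (Lam b) Y'.
Proof. intros H.
  assert (Hr : R2 (Lam b) Y -> exists Y', steps Y Y' /\ is_value Y' /\ U R1 (Lam b) Y').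
  { intros H2. destruct (B_clause _ _ H2) as [_ [H3 _]]. destruct (H3 b eq_refl) as [N' [Hs [HR _]]].
    exists (Lam N'); split; [auto|split; [eexists; eauto|apply U_hole; auto]]. }
  inversion H; subst; auto. inversion H0; subst; auto. apply Hr, B_sub; auto.
  exists (Lam b0); split; [constructor|split; [eexists; eauto|auto]].
Qed.

Lemma T_closed_R1 A Bt : R1 A Bt -> closed A /\ closed Bt.
Proof. intros; apply B_closed, B_sub; auto. Qed.

Lemma sound_step M M' : step M M' -> forall Y, closed M -> closed Y -> T M Y ->
  exists Y', steps Y Y' /\ T M' Y'.
Proof.
  intros HS Y HM HY HT.
  assert (Hgen : forall M M' Y, step M M' -> R2 M Y -> exists Y', steps Y Y' /\ T M' Y').
  { clear HS HM HY HT. intros M0 M0' Y0 HS HR. destruct (B_clause _ _ HR) as [H1 _].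
    destruct (H1 _ HS) as [Y' [? ?]]. exists Y'; split; [auto|apply T_hole; auto]. }
  revert Y HM HY HT. induction HS; intros Y HM HY HT;
    (destruct (T_app_inv _ _ _ HT) as [HR|[a' [b' [-> [Ta Tb]]]]];
    [eapply Hgen; eauto; econstructor; eauto|]);
    destruct (closed_app _ _ HM) as [HM1 HM2]; destruct (closed_app _ _ HY) as [HY1 HY2].
  - destruct (IHHS _ HM2 HY2 Tb) as [b'' [Hs Tb']].
    exists (App a' b''); split; [apply steps_appR; auto|apply T_app; auto].
  - destruct H as [v ->]. destruct (T_val _ _ Tb) as [v'' [Hs [Hv Uv]]].
    destruct (IHHS _ HM1 HY1 Ta) as [a'' [Ha Ta']].
    exists (App a'' v''); split.
    + eapply steps_trans'; [apply steps_appR; eauto|]. apply steps_appL; auto.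
    + apply T_app; auto. apply T_U; auto.
  - destruct (T_val _ _ Ta) as [f'' [Hsf [Hvf Uf]]].
    destruct H as [v ->]. destruct (T_val _ _ Tb) as [v'' [Hs [Hv Uv]]].
    assert (Hcv : closed v'') by (eapply steps_closed; eauto).
    destruct Hvf as [F ->].
    assert (Hst : steps (App a' b') (App (Lam F) v'')).
    { eapply steps_trans'; [apply steps_appR; eauto|]. apply steps_appL; auto. }
    inversion Uf; subst.
    + destruct (B_clause _ _ (B_sub _ _ H)) as [_ [H2 _]].
      destruct (H2 P eq_refl) as [N' [HsN [_ Hinst]]]. apply steps_lam in HsN. injection HsN as ->.
      exists (inst F v''); split.
      * eapply steps_trans'; [eauto|]. eapply steps_trans; [apply step_beta; auto|constructor].
      * apply T_hole. apply Hinst; [eexists; eauto|auto|apply U_ctx_closure; auto].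
    + exists (inst F v''); split.
      * eapply steps_trans'; [eauto|]. eapply steps_trans; [apply step_beta; auto|constructor].
      * apply T_U. unfold inst. apply U_subst; auto. apply T_closed_R1.
Qed.

Lemma sound_conv M V : steps M V -> is_value V -> forall Y, closed M -> closed Y -> T M Y -> converges Y.
Proof. induction 1; intros HV Y HM HY HT.
- destruct HV as [b ->]. destruct (T_val _ _ HT) as [Y' [Hs [Hv _]]]. exists Y'; auto.
- destruct (sound_step _ _ H _ HM HY HT) as [Y' [Hs HT']].
  eapply steps_conv; eauto. apply IHsteps; auto; [eapply step_closed; eauto|eapply steps_closed; eauto].
Qed.

Lemma T_efill E M N : T M N -> T (efill E M) (efill E N).
Proof. intros H; induction E; simpl; auto; apply T_app; auto; apply T_U, U_refl. Qed.

Lemma sound_dir M N : R2 M N -> forall E, ectx_ok E -> converges (efill E M) -> converges (efill E N).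
Proof. intros H E HE [V [H1 H2]]. destruct (B_closed _ _ H).
  eapply sound_conv; eauto using efill_closed. apply T_efill, T_hole; auto. Qed.
End Sound.

Definition flip (R : rel) : rel := fun a b => R b a.

Lemma ctx_closure_flip R P Q : ctx_closure (flip R) P Q -> ctx_closure R Q P.
Proof. intros [C [Ms [Ns [H1 [H2 [H3 [H4 [H5 H6]]]]]]]].
  exists C, Ns, Ms. rewrite <- (Forall2_length H2). repeat split; auto.
  clear -H2. induction H2; constructor; auto.
Qed.

Lemma bisim_flip R1 R2 : cbv_coupled_bisim R1 R2 -> cbv_coupled_bisim (flip R1) (flip R2).
Proof. intros [Hc [Hs Hb]]. split; [|split].
- intros M N H. destruct (Hc _ _ H); auto.
- intros M N H. apply Hs; auto.
- intros M N H. unfold flip in H. destruct (Hb _ _ H) as [H1 [H2 [H3 H4]]].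
  split; [|split; [|split]].
  + intros M' HS. destruct (H3 _ HS) as [N' [? ?]]; eauto.
  + intros M' ->. destruct (H4 _ eq_refl) as [N' [? [? Hi]]]. exists N'; split; [auto|split; [auto|]].
    intros P Q HP HQ HPQ. apply Hi; auto. apply ctx_closure_flip; auto.
  + intros N' HS. destruct (H1 _ HS) as [M' [? ?]]; eauto.
  + intros N' ->. destruct (H2 _ eq_refl) as [M' [? [? Hi]]]. exists M'; split; [auto|split; [auto|]].
    intros P Q HP HQ HPQ. apply Hi; auto. apply ctx_closure_flip; auto.
Qed.

Lemma sound R1 R2 M N : cbv_coupled_bisim R1 R2 -> R2 M N -> ev_equiv M N.
Proof. intros B H. pose proof (B_closed _ _ B _ _ H) as [HM HN].
  split; [auto|split; [auto|]]. intros E HE; split.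
  - apply (sound_dir _ _ B); auto.
  - apply (sound_dir _ _ (bisim_flip _ _ B)); auto.
Qed.

Lemma ctx_ev_bisim : cbv_coupled_bisim ctx_equiv ev_equiv.
Proof. split; [|split].
- apply ev_closed.
- apply ctx_ev.
- intros M N H. destruct (ev_closed _ _ H) as [HM HN]. split; [|split; [|split]].
  + intros M' HS. exists N; split; [constructor|]. apply ev_trans with M; auto.
    apply ev_sym, ev_step; auto.
  + intros M' ->. assert (converges (Lam M')) by (exists (Lam M'); split; [constructor|eexists; eauto]).
    destruct (ev_conv _ _ H H0) as [V [Hs [N' ->]]]. exists N'.
    assert (HL : ev_equiv (Lam M') (Lam N')) by (eapply ev_trans; [eauto|apply ev_steps; auto]).
    split; [auto|split; [apply ev_ctx; auto|]].
    intros; apply ev_lam_inst; auto.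
  + intros N' HS. exists M; split; [constructor|]. apply ev_trans with N; auto.
    apply ev_step; auto.
  + intros N' ->. assert (converges (Lam N')) by (exists (Lam N'); split; [constructor|eexists; eauto]).
    destruct (ev_conv _ _ (ev_sym _ _ H) H0) as [V [Hs [M' ->]]]. exists M'.
    assert (HL : ev_equiv (Lam M') (Lam N')).
    { apply ev_trans with M; [apply ev_sym, ev_steps; auto|auto]. }
    split; [auto|split; [apply ev_ctx; auto|]].
    intros; apply ev_lam_inst; auto.
Qed.

Theorem mainTheorem17 :
  (forall M N, approx1 M N <-> ctx_equiv M N) /\
  (forall M N, approx2 M N <-> ev_equiv M N) /\
  cbv_coupled_bisim ctx_equiv ev_equiv /\
  (forall M N, (approx1 M N <-> ctx_equiv M N) /\ (ctx_equiv M N <-> ev_equiv M N)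
               /\ (ev_equiv M N <-> approx2 M N)).
Proof.
  assert (A1 : forall M N, approx1 M N <-> ctx_equiv M N).
  { intros M N; split.
    - intros [R1 [R2 [B H]]]. apply ev_ctx. eapply sound; eauto. eapply B_sub; eauto.
    - intros H. exists ctx_equiv, ev_equiv; split; auto using ctx_ev_bisim. }
  assert (A2 : forall M N, approx2 M N <-> ev_equiv M N).
  { intros M N; split.
    - intros [R1 [R2 [B H]]]. eapply sound; eauto.
    - intros H. exists ctx_equiv, ev_equiv; split; auto using ctx_ev_bisim. }
  split; [auto|split; [auto|split; [apply ctx_ev_bisim|]]].
  intros M N. split; [auto|split; [split; [apply ctx_ev|apply ev_ctx]|]].
  split; apply A2.
Qed.
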